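(* Let $\mu$ be a strict partition and $g$ a function from strict partitions to $\mathbb{C}$. For $n\ge0$ let $$A(n)=\sum_{|\lambda/\mu|=n}f'_{\lambda/\mu}\,g(\lambda),\qquad B(n)=\sum_{|\lambda/\mu|=n}f'_{\lambda/\mu}\,Dg(\lambda),$$ the sums ranging over strict partitions $\lambda\supseteq\mu$ with $|\lambda|-|\mu|=n$. Then $A(n)=A(0)+\sum_{k=0}^{n-1}B(k)$ for all $n\ge0$.
   Context: A strict partition is a finite strictly decreasing sequence of positive integers $\lambda=(\lambda_1>\cdots>\lambda_\ell)$ (the empty sequence is allowed); $|\lambda|=\sum_i\lambda_i$, $\ell(\lambda)=\ell$, and $\lambda_i=0$ for $i>\ell(\lambda)$. The (shifted Young) diagram of $\lambda$ is the set of boxes $(i,j)$ with $1\le i\le\ell(\lambda)$, $i+1\le j\le i+\lambda_i$; $\lambda$ is identified with its diagram. Write $\lambda\supseteq\mu$ if $\lambda_i\ge\mu_i$ for all $i$; $\lambda/\mu$ is the set of boxes of $\lambda$ not in $\mu$, and $|\lambda/\mu|=|\lambda|-|\mu|$. $f_{\lambda/\mu}$ is the number of standard shifted Young tableaux of shape $\lambda/\mu$, i.e. bijective fillings of the boxes of $\lambda/\mu$ with $1,\dots,|\lambda/\mu|$ increasing from left to right along rows and from top to bottom along columns ($f_{\mu/\mu}=1$), and $f'_{\lambda/\mu}=2^{|\lambda|-|\mu|-\ell(\lambda)+\ell(\mu)}f_{\lambda/\mu}$. For a strict partition $\lambda$, $\lambda^+$ denotes any strict partition obtained from $\lambda$ by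 adding one box ($\lambda^+\supseteq\lambda$, $|\lambda^+|=|\lambda|+1$). The difference operator $D$ on functions $g$ of strict partitions is $$Dg(\lambda)=\sum_{\lambda^+:\ \ell(\lambda^+)>\ell(\lambda)}g(\lambda^+)+2\sum_{\lambda^+:\ \ell(\lambda^+)=\ell(\lambda)}g(\lambda^+)-g(\lambda).$$ *)

(* Defs.v *)
From mathcomp Require Import all_boot all_order all_algebra.
From mathcomp Require Import fingroup perm complex Rstruct.
Set Implicit Arguments. Unset Strict Implicit. Unset Printing Implicit Defensive.
Import GRing.Theory Num.Theory.

Definition Cplx := (Rdefinitions.R)[i].

Definition is_strict (l : seq nat) : bool :=
  sorted (fun a b => b < a) l && all (fun x => 0 < x) l.

Definition psize (l : seq nat) : nat := sumn l.

(* lambda_i (1-based index), = 0 beyond the length *)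
Definition part (l : seq nat) (i : nat) : nat := nth 0 l i.-1.

Definition contains (l m : seq nat) : bool :=
  all (fun i => part m i <= part l i) (iota 1 (size m)).

(* Boxes (i,j) of the shifted skew diagram l/m (assuming l ⊇ m):
   1 <= i <= size l, i + m_i + 1 <= j <= i + l_i. *)
Definition skew_boxes (l m : seq nat) : seq (nat * nat) :=
  [seq (i, j) | i <- iota 1 (size l),
                j <- iota (i + part m i).+1 (part l i - part m i)].

(* Standard shifted tableaux of shape l/m: bijective fillings of the boxes
   (listed as skew_boxes l m, box number k) with 1..N (box k gets s k + 1),
   increasing along rows (left to right) and columns (top to bottom). *)
Definition std_filling (B : seq (nat * nat)) (s : {perm 'I_(size B)}) : bool :=
  [forall k : 'I_(size B), forall k' : 'I_(size B),
     let b := nth (0, 0) B k in let b' := nth (0, 0) B k' in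
     ((b.1 == b'.1) && (b.2 < b'.2) ==> (s k < s k')) &&
     ((b.2 == b'.2) && (b.1 < b'.1) ==> (s k < s k'))].

Definition f_skew (l m : seq nat) : nat :=
  #|[set s : {perm 'I_(size (skew_boxes l m))} | std_filling s]|.

(* f'_{l/m} = 2^(|l| - |m| - size l + size m) f_{l/m} (exponent is >= 0 when l ⊇ m) *)
Definition f'_skew (l m : seq nat) : Cplx :=
  (2 ^+ ((psize l + size m) - (psize m + size l)) * (f_skew l m)%:R)%R.

Definition sp_of_set (M : nat) (S : {set 'I_M.+1}) : seq nat :=
  sort geq [seq val i | i <- enum S].

(* All strict partitions of size M (each exactly once): a strict partition of M
   is determined by its set of parts, a subset of {1,...,M}. *)
Definition strict_parts (M : nat) : seq (seq nat) :=
  [seq sp_of_set X | X <- enum [pred X : {set 'I_M.+1} |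
                                 is_strict (sp_of_set X) && (psize (sp_of_set X) == M)]].

Definition Dop (g : seq nat -> Cplx) (l : seq nat) : Cplx :=
  (\sum_(lp <- strict_parts (psize l).+1 | contains lp l && (size l < size lp)%N) g lp
   + 2 * \sum_(lp <- strict_parts (psize l).+1 | contains lp l && (size lp == size l)%N) g lp
   - g l)%R.

Definition skew_sum (m : seq nat) (h : seq nat -> Cplx) (n : nat) : Cplx :=
  (\sum_(l <- strict_parts (psize m + n) | contains l m) f'_skew l m * h l)%R.

(* Main.v *)
Require Import Defs.
From mathcomp Require Import all_boot all_order all_algebra.
From mathcomp Require Import fingroup perm complex Rstruct.
From mathcomp Require Import zify.
Set Implicit Arguments. Unset Strict Implicit. Unset Printing Implicit Defensive.


Definition fc n (r : nat -> nat -> bool) :=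
  #|[set s : {perm 'I_n} | [forall a : 'I_n, forall b : 'I_n, r a b ==> (s a < s b)]]|.

Lemma fc_ext n r r' : (forall a b, a < n -> b < n -> r a b = r' a b) -> fc n r = fc n r'.
Proof.
move=> H; rewrite /fc; apply: eq_card => s; rewrite !inE.
apply: eq_forallb => a; apply: eq_forallb => b; by rewrite H.
Qed.

Lemma lift_max_val n (x : 'I_n) : val (lift (@ord_max n) x) = val x.
Proof. by rewrite /= /bump leqNgt ltn_ord. Qed.

Lemma fc_rec n r : (forall a, r a a = false) ->
  fc n.+1 r = \sum_(k < n.+1 | [forall b : 'I_n.+1, ~~ r k b])
                 fc n (fun a b => r (bump k a) (bump k b)).
Proof.
move=> irr; rewrite /fc -sum1_card.
rewrite (partition_big (fun s : {perm 'I_n.+1} => s^-1%g ord_max) predT) //=.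
rewrite [RHS]big_mkcond /=; apply: eq_bigr => k _.
rewrite (eq_bigl (fun s : {perm 'I_n.+1} => (s k == ord_max) &&
   (s \in [set s : {perm 'I_n.+1} | [forall a : 'I_n.+1, forall b : 'I_n.+1, r a b ==> (s a < s b)]]))); last first.
  move=> s; rewrite andbC; congr (_ && _).
  by apply/eqP/eqP => [<-|<-]; rewrite ?permKV ?permK.
rewrite (reindex (lift_perm k ord_max)); last first.
  pose ulsf i (s : 'S_n.+1) x := odflt x (unlift (s i) (s (lift i x))).
  have ulsfK i (s : 'S_n.+1) x: lift (s i) (ulsf i s x) = s (lift i x).
    rewrite /ulsf; have:= neq_lift i x.
    by rewrite -(can_eq (permK s)) => /unlift_some[] ? ? ->.
  have inj_ulsf: injective (ulsf k _).
    move=> s; apply: can_inj (ulsf (s k) s^-1%g) _ => k'.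
    by rewrite {1}/ulsf ulsfK !permK liftK.
  exists (fun s => perm (inj_ulsf s)) => [s _ | s].
    by apply/permP=> k'; rewrite permE /ulsf lift_perm_lift lift_perm_id liftK.
  move/andP=> [/eqP si0 _]; apply/permP=> k'.
  case: (unliftP k k') => [k''|] ->; rewrite ?lift_perm_id //.
  by rewrite lift_perm_lift -si0 permE ulsfK.
rewrite (eq_bigl (fun s' : {perm 'I_n} => [forall b : 'I_n.+1, ~~ r k b] &&
   (s' \in [set s : {perm 'I_n} | [forall a : 'I_n, forall b : 'I_n,
       r (bump k a) (bump k b) ==> (s a < s b)]]))); last first.
  move=> s'; rewrite lift_perm_id eqxx /= !inE.
  apply/idP/idP.
  - move=> /forallP H; apply/andP; split.
      apply/forallP => b; apply/negP => rkb.
      have := implyP (forallP (H k) b) rkb.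
      by rewrite lift_perm_id /= ltnNge -ltnS ltn_ord.
    apply/forallP => a; apply/forallP => b; apply/implyP => rab.
    have := implyP (forallP (H (lift k a)) (lift k b)) rab.
    by rewrite !lift_perm_lift !lift_max_val.
  - move=> /andP[/forallP Hm /forallP H].
    apply/forallP => a; apply/forallP => b; apply/implyP => rab.
    case: (unliftP k a) rab => [a'|] ->; last by rewrite (negbTE (Hm b)).
    case: (unliftP k b) => [b'|] -> rab.
      by rewrite !lift_perm_lift !lift_max_val; exact: (implyP (forallP (H a') b') rab).
    by rewrite lift_perm_lift lift_perm_id lift_max_val /= ltn_ord.
case: ifP => Hm; last by rewrite big_pred0.
by rewrite sum1_card.
Qed.


Definition boxrel (b b' : nat * nat) : bool :=
  ((b.1 == b'.1) && (b.2 < b'.2)) || ((b.2 == b'.2) && (b.1 < b'.1)).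
Definition rB (B : seq (nat * nat)) (i j : nat) := boxrel (nth (0,0) B i) (nth (0,0) B j).
Definition fcount B := fc (size B) (rB B).
Definition maxb (B : seq (nat * nat)) b := all (fun b' => ~~ boxrel b b') B.

Lemma f_skewE l m : f_skew l m = fcount (skew_boxes l m).
Proof.
rewrite /f_skew /fcount /fc; apply: eq_card => s; rewrite !inE /std_filling.
apply: eq_forallb => a; apply: eq_forallb => b /=.
rewrite /rB /boxrel; case: (s a < s b); rewrite ?implybT //= !implybF negb_or; reflexivity.
Qed.

Lemma boxrel_irr b : boxrel b b = false.
Proof. by rewrite /boxrel !ltnn !andbF. Qed.

Lemma nth_rem_uniq (B : seq (nat * nat)) k a : uniq B -> k < size B ->
  a < (size B).-1 -> nth (0,0) (rem (nth (0,0) B k) B) a = nth (0,0) B (bump k a).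
Proof.
move=> uB kB aB; rewrite remE index_uniq // nth_cat size_take kB.
rewrite /bump; case: ltnP => ak.
  by rewrite nth_take // add0n.
rewrite nth_drop add1n; congr nth.
by rewrite addSn subnKC.
Qed.

Lemma fcount_rec B : 0 < size B -> uniq B ->
  fcount B = \sum_(b <- B | maxb B b) fcount (rem b B).
Proof.
move=> pos uB; have [N HN] : exists N, size B = N.+1 by exists (size B).-1; rewrite prednK.
rewrite /fcount {1}HN fc_rec; last by move=> a; rewrite /rB boxrel_irr.
rewrite (big_nth (0,0)) HN big_mkord.
apply: eq_big => [k|k Hk].
  apply/forallP/(all_nthP (0,0)) => H i; last first.
    by apply: H; rewrite HN.
  by rewrite HN => Hi; have := H (Ordinal Hi).
have kB : k < size B by rewrite HN.
rewrite size_rem ?mem_nth // HN /=; apply: fc_ext => a b Ha Hb.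
by rewrite /rB !nth_rem_uniq // HN.
Qed.


Lemma strict_pos l i : is_strict l -> i < size l -> 0 < nth 0 l i.
Proof. by case/andP=> _ /all_nthP; apply. Qed.

Lemma strict_step l i : is_strict l -> i.+1 < size l -> nth 0 l i.+1 < nth 0 l i.
Proof. by case/andP=> /sortedP H _; apply: H. Qed.

Lemma strict_gt0 l i : is_strict l -> (0 < nth 0 l i) = (i < size l).
Proof.
move=> sl; case: (ltnP i (size l)) => H; first by rewrite strict_pos.
by rewrite nth_default.
Qed.

Lemma strict_gap l a b : is_strict l -> a <= b -> b < size l ->
  nth 0 l b + b <= nth 0 l a + a.
Proof.
move=> sl; elim: b => [|b IH] ab bl; first by move: ab; rewrite leqn0 => /eqP->.
case: (ltngtP a b.+1) ab => // [ab|<-] _; last by [].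
have := strict_step sl bl; have := IH ab (ltnW bl).
by rewrite addnS; move=> h1 h2; apply: leq_trans h1; rewrite -addSn leq_add2r.
Qed.

Lemma strictI l : (forall i, i < size l -> 0 < nth 0 l i) ->
  (forall i, i.+1 < size l -> nth 0 l i.+1 < nth 0 l i) -> is_strict l.
Proof.
move=> h1 h2; apply/andP; split; first by apply/(sortedP 0).
by apply/(all_nthP 0).
Qed.

Lemma containsP l m : reflect (forall i, nth 0 m i <= nth 0 l i) (contains l m).
Proof.
apply: (iffP allP) => H i.
  case: (ltnP i (size m)) => hi; last by rewrite nth_default.
  by apply: (H i.+1); rewrite mem_iota /= add1n ltnS.
rewrite mem_iota => /andP[h _]; rewrite /part; exact: H.
Qed.

Lemma psize_sum l K : size l <= K -> psize l = \sum_(i < K) nth 0 l i.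
Proof.
move=> hK; rewrite /psize sumnE (big_nth 0) big_mkord.
rewrite -(subnKC hK) big_split_ord /= [X in _ + X]big1 ?addn0 // => i _.
by rewrite nth_default // leq_addr.
Qed.

Lemma nth_sp M (X : {set 'I_M.+1}) : 
  sp_of_set X =i [seq val i | i <- enum X].
Proof. by move=> x; rewrite /sp_of_set mem_sort. Qed.

Lemma sp_inj M : injective (@sp_of_set M).
Proof.
move=> X Y E; apply/setP => i.
have: (val i \in sp_of_set X) = (val i \in sp_of_set Y) by rewrite E.
rewrite !nth_sp !(mem_map val_inj) !mem_enum; done.
Qed.

Lemma strict_parts_uniq M : uniq (strict_parts M).
Proof. by rewrite map_inj_uniq ?enum_uniq //; exact: sp_inj. Qed.

Lemma strict_le_psize l x : x \in l -> x <= psize l.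
Proof.
rewrite /psize; elim: l => //= y l IH; rewrite in_cons => /orP[/eqP->|/IH].
  exact: leq_addr.
by move=> h; apply: leq_trans h (leq_addl _ _).
Qed.

Lemma mem_strict_parts M l : (l \in strict_parts M) = is_strict l && (psize l == M).
Proof.
apply/idP/idP.
  by case/mapP=> X; rewrite mem_enum inE => H ->.
case/andP=> sl /eqP pl.
have sortl : sort geq l = l.
  apply: sorted_sort; first by move=> a b c h1 h2; exact: leq_trans h2 h1.
  case/andP: sl => s _; apply: sub_sorted s => a b /ltnW; done.
have uniql : uniq l.
  case/andP: sl => s _; apply: (sorted_uniq (leT := fun a b => b < a)) s.
  - by move=> a b c h1 h2; exact: ltn_trans h2 h1.
  - by move=> a; rewrite ltnn.
have lt : forall x, x \in l -> x < M.+1 by move=> x /strict_le_psize; rewrite pl.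
pose X := [set i : 'I_M.+1 | val i \in l].
have EX : sp_of_set X = l.
  rewrite /sp_of_set -[RHS]sortl; apply/perm_sortP.
  - by move=> a b; apply: leq_total.
  - by move=> a b c h1 h2; exact: leq_trans h2 h1.
  - by move=> a b /andP[h1 h2]; apply: anti_leq; apply/andP; split.
  apply: uniq_perm; first by rewrite map_inj_uniq ?enum_uniq //; exact: val_inj.
    done.
  move=> x; apply/mapP/idP => [[i ]|hx].
    by rewrite mem_enum inE => h ->.
  by exists (Ordinal (lt x hx)); rewrite // mem_enum inE.
apply/mapP; exists X => //; rewrite mem_enum inE EX sl pl eqxx; done.
Qed.


Definition dec (v : seq nat) (i : nat) : seq nat :=
  if part v i == 1 then take i.-1 v else set_nth 0 v i.-1 (part v i).-1.
Definition cond (v m : seq nat) (i : nat) : bool :=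
  (part m i < part v i) && (((part v i.+1).+1 < part v i) || (part v i.+1 == 0)).

Lemma last_one v j : is_strict v -> j < size v -> nth 0 v j = 1 -> size v = j.+1.
Proof.
move=> sv jv h; case: (ltngtP (size v) j.+1) => //; first by lia.
move=> hj; have := strict_step sv hj; have := strict_pos sv hj; lia.
Qed.

Lemma nth_dec v j r : is_strict v -> j < size v ->
  nth 0 (dec v j.+1) r = if r == j then (nth 0 v j).-1 else nth 0 v r.
Proof.
move=> sv jv; rewrite /dec /part /=; case: ifP => [/eqP h1|h1].
  have sz := last_one sv jv h1.
  case: (ltnP r j) => h.
    by rewrite nth_take // ifN //; lia.
  rewrite nth_default; last by rewrite size_takel; lia.
  case: eqP => [_|ne]; first by rewrite h1.
  by rewrite nth_default //; lia.
by rewrite nth_set_nth.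
Qed.

Lemma size_dec v j : is_strict v -> j < size v ->
  size (dec v j.+1) = if nth 0 v j == 1 then j else size v.
Proof.
move=> sv jv; rewrite /dec /part /=; case: ifP => [/eqP h1|h1].
  by rewrite size_takel; have := last_one sv jv h1; lia.
by rewrite size_set_nth; lia.
Qed.

Lemma psize_dec v j : is_strict v -> j < size v -> psize (dec v j.+1) = (psize v).-1.
Proof.
move=> sv jv; have hs : size (dec v j.+1) <= size v.
  by rewrite size_dec //; case: ifP => //; lia.
rewrite (psize_sum hs) (psize_sum (leqnn _)).
rewrite (bigD1 (Ordinal jv)) //= [in RHS](bigD1 (Ordinal jv)) //= nth_dec // eqxx.
have p := strict_pos sv jv.
rewrite (eq_bigr (fun i : 'I_(size v) => nth 0 v i)); first by lia.
by move=> i /eqP ne; rewrite nth_dec // ifN //; apply/eqP => h; apply: ne; apply: val_inj.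
Qed.

Lemma strict_dec v m j : is_strict v -> j < size v -> cond v m j.+1 -> is_strict (dec v j.+1).
Proof.
move=> sv jv /andP[_ c]; rewrite /part /= in c.
have hs := size_dec sv jv.
apply: strictI => [r|r]; rewrite hs !nth_dec //.
  case: ifP => [/eqP h1|h1] hr.
    by case: eqP => [E|_]; [lia | apply: strict_pos; lia].
  case: eqP => [_|_]; last exact: strict_pos.
  have := strict_pos sv jv; move/negbT: h1; lia.
move=> hr; have hr' : r.+1 < size v by case: ifP hr => _; lia.
case: (eqVneq r.+1 j) => [E|ne].
  rewrite -E ifN; last by lia.
  have := strict_step sv hr'; lia.
case: (eqVneq r j) => [E|ne2]; last exact: strict_step.
subst r; case/orP: c; first by lia.
move/eqP=> h0; have := strict_pos sv hr'; lia.
Qed.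

Lemma strict_eq a b : is_strict a -> is_strict b -> (forall r, nth 0 a r = nth 0 b r) -> a = b.
Proof.
move=> sa sb E.
have sz : size a = size b.
  apply/eqP; rewrite eqn_leq; apply/andP; split.
    by rewrite leqNgt -(strict_gt0 (size b) sa) E (strict_gt0 (size b) sb) ltnn.
  by rewrite leqNgt -(strict_gt0 (size a) sb) -E (strict_gt0 (size a) sa) ltnn.
by apply: (eq_from_nth sz) => i _; apply: E.
Qed.


Lemma dec_in v m j : is_strict v -> contains v m -> j < size v -> cond v m j.+1 ->
  [&& is_strict (dec v j.+1), psize (dec v j.+1) == (psize v).-1,
      contains (dec v j.+1) m & contains v (dec v j.+1)].
Proof.
move=> sv cvm jv c; rewrite (strict_dec sv jv c) psize_dec // eqxx /=.
case/andP: c; rewrite /part /= => c _.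
apply/andP; split; apply/containsP => r; rewrite nth_dec //; case: eqP => [->|_] //.
- by move: c; lia.
- exact/containsP.
- by lia.
Qed.

Lemma dec_char v m l : is_strict v -> 0 < psize v ->
  [&& is_strict l, psize l == (psize v).-1, contains l m & contains v l] ->
  exists2 j, j < size v & cond v m j.+1 && (l == dec v j.+1).
Proof.
move=> sv pv /and4P[sl /eqP pl /containsP clm /containsP cvl].
set K := size v.
have hl : size l <= K.
  rewrite leqNgt; apply/negP => h.
  have := cvl K; have := strict_pos sl h; rewrite [nth 0 v K]nth_default //; lia.
have Ev := psize_sum (leqnn K); have El := psize_sum hl.
case: (pickP (fun j : 'I_K => nth 0 l j < nth 0 v j)) => [j hj|H]; last first.
  have : \sum_(i < K) nth 0 v i <= \sum_(i < K) nth 0 l i.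
    by apply: leq_sum => i _; have := H i; rewrite /=; lia.
  lia.
rewrite (bigD1 j) //= in El; rewrite (bigD1 j) //= in Ev.
have Rle : \sum_(i < K | i != j) nth 0 l i <= \sum_(i < K | i != j) nth 0 v i.
  by apply: leq_sum => i _.
have [ej eR] : nth 0 v j = (nth 0 l j).+1 /\ \sum_(i < K | i != j) nth 0 l i = \sum_(i < K | i != j) nth 0 v i.
  move: El Ev Rle hj pl; clear; move: (psize l) (psize v) (nth 0 l j) (nth 0 v j) (\sum_(i < K | i != j) nth 0 l i) (\sum_(i < K | i != j) nth 0 v i).
  move=> *; lia.
have eo : forall r, r != val j -> nth 0 l r = nth 0 v r.
  move=> r rj; case: (ltnP r K) => hr; last by rewrite !nth_default //; lia.
  have rj' : Ordinal hr != j by apply: contraNneq rj => <-.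
  rewrite (bigD1 (Ordinal hr)) //= in eR; rewrite [X in _ = X](bigD1 (Ordinal hr)) //= in eR.
  have : \sum_(i < K | (i != j) && (i != Ordinal hr)) nth 0 l i <=
         \sum_(i < K | (i != j) && (i != Ordinal hr)) nth 0 v i by apply: leq_sum => i _.
  have := cvl r; move: eR; rewrite /=; clear.
  move: (\sum_(i < K | (i != j) && (i != Ordinal hr)) nth 0 l i) (\sum_(i < K | (i != j) && (i != Ordinal hr)) nth 0 v i).
  move=> *; lia.
clear El Ev Rle eR.
have cnd : cond v m (val j).+1.
  rewrite /cond /part /=; apply/andP; split.
    by have := clm j; lia.
  case: (eqVneq (nth 0 v j.+1) 0) => [->|nz]; first by rewrite orbT.
  have jv1 : j.+1 < K by rewrite -(strict_gt0 _ sv) lt0n.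
  have jl1 : j.+1 < size l.
    rewrite -(strict_gt0 _ sl) eo; first by rewrite lt0n.
    by rewrite neq_ltn ltnSn orbT.
  have := strict_step sl jl1; rewrite eo; first lia.
  by rewrite neq_ltn ltnSn orbT.
exists (val j); first exact: ltn_ord.
rewrite cnd /=; apply/eqP.
apply: strict_eq => //; first exact: (strict_dec sv (ltn_ord j) cnd).
move=> r; rewrite nth_dec //; case: eqP => [->|/eqP ne]; first by lia.
exact: eo.
Qed.

Lemma reindex_dec v m (F : seq nat -> Cplx) : is_strict v -> contains v m -> 0 < psize v ->
  (\sum_(l <- strict_parts (psize v).-1 | contains l m && contains v l) F l =
   \sum_(i <- iota 1 (size v) | cond v m i) F (dec v i))%R.
Proof.
move=> sv cvm pv.
rewrite [RHS](_ : _ = \sum_(l <- map (dec v) (filter (cond v m) (iota 1 (size v)))) F l)%R;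
  last by rewrite big_map big_filter.
rewrite -big_filter; apply: perm_big; apply: uniq_perm.
- by rewrite filter_uniq // strict_parts_uniq.
- rewrite map_inj_in_uniq ?filter_uniq ?iota_uniq //.
  move=> i i'; rewrite !mem_filter !mem_iota => /andP[_ /andP[h1 h2]] /andP[_ /andP[h1' h2']].
  case: i h1 h2 => // j _ hj; case: i' h1' h2' => // j' _ hj' E.
  rewrite add1n ltnS in hj hj'.
  have := f_equal (fun s => nth 0 s j) E; rewrite !nth_dec // eqxx.
  case: eqP => [->//|_]; have := strict_pos sv hj; lia.
- move=> l; rewrite mem_filter mem_strict_parts; apply/idP/mapP.
  + move=> H; have [j hj /andP[c /eqP ->]] : exists2 j, j < size v & cond v m j.+1 && (l == dec v j.+1).
      by apply: dec_char => //; move: H; rewrite andbC -!andbA.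
    by exists j.+1 => //; rewrite mem_filter c mem_iota /= add1n ltnS hj.
  + case=> i; rewrite mem_filter mem_iota => /andP[c /andP[h1 h2]] ->.
    case: i c h1 h2 => // j c _ hj; rewrite add1n ltnS in hj.
    by have := dec_in sv cvm hj c; case/and4P => -> -> -> ->.
Qed.


Definition rowB (l m : seq nat) (i : nat) : seq (nat * nat) :=
  [seq (i, j) | j <- iota (i + part m i).+1 (part l i - part m i)].
Definition rowsB l m s := flatten [seq rowB l m i | i <- s].

Lemma skew_boxesE l m : skew_boxes l m = rowsB l m (iota 1 (size l)).
Proof. by []. Qed.

Lemma rowsB_cons l m i s : rowsB l m (i :: s) = rowB l m i ++ rowsB l m s.
Proof. by []. Qed.

Lemma mem_rowB l m i a b : ((a, b) \in rowB l m i) = (a == i) && (i + part m i < b <= i + part l i).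
Proof.
apply/mapP/idP => [[j]|/andP[/eqP -> h]].
  rewrite mem_iota => /andP[h1 h2] [-> ->]; rewrite eqxx /=.
  apply/andP; split => //; lia.
exists b => //; rewrite mem_iota; lia.
Qed.

Lemma mem_rowsB l m s a b : ((a, b) \in rowsB l m s) = (a \in s) && (a + part m a < b <= a + part l a).
Proof.
elim: s => //= i s IH; rewrite rowsB_cons mem_cat mem_rowB IH in_cons.
by case: eqP => [->|_] /=; case: (_ \in s); rewrite ?orbT ?orbF ?andbF ?andbT //; case: (_ && _).
Qed.

Lemma rowsB_uniq l m s : uniq s -> uniq (rowsB l m s).
Proof.
elim: s => //= i s IH /andP[ni us]; rewrite rowsB_cons cat_uniq IH // andbT.
apply/andP; split.
  rewrite map_inj_uniq ?iota_uniq //; by move=> x y [].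
apply/hasPn => [[a b]]; rewrite mem_rowsB => /andP[hs _].
rewrite mem_rowB; apply/negP => /andP[/eqP ai _]; by move: ni; rewrite -ai hs.
Qed.

Lemma rowsB_cat l m s1 s2 : rowsB l m (s1 ++ s2) = rowsB l m s1 ++ rowsB l m s2.
Proof. by rewrite /rowsB map_cat flatten_cat. Qed.

Lemma skew_boxes_ext l m K : size l <= K -> skew_boxes l m = rowsB l m (iota 1 K).
Proof.
move=> hK; rewrite skew_boxesE -(subnKC hK) iotaD rowsB_cat.
rewrite [X in _ ++ X](_ : _ = [::]) ?cats0 //.
have : size l < 1 + size l by rewrite add1n.
elim: (K - size l) (1 + size l) => //= n IH a ha.
rewrite rowsB_cons IH; last by lia.
by rewrite /rowB /part [nth 0 l _]nth_default ?sub0n //=; lia.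
Qed.

Lemma mem_skew l m a b : ((a, b) \in skew_boxes l m) =
  [&& 0 < a, a <= size l & a + part m a < b <= a + part l a].
Proof. by rewrite skew_boxesE mem_rowsB mem_iota add1n ltnS -andbA. Qed.

Lemma skew_uniq l m : uniq (skew_boxes l m).
Proof. by rewrite skew_boxesE rowsB_uniq ?iota_uniq. Qed.

Lemma rem_cat (T : eqType) (x : T) s1 s2 :
  rem x (s1 ++ s2) = if x \in s1 then rem x s1 ++ s2 else s1 ++ rem x s2.
Proof.
elim: s1 => //= y s1 IH; rewrite in_cons eq_sym; case: eqP => //= _.
by rewrite IH; case: (x \in s1).
Qed.

Lemma rem_rcons (T : eqType) (x : T) s : x \notin s -> rem x (rcons s x) = s.
Proof.
elim: s => /=; first by rewrite eqxx.
by move=> y s IH; rewrite in_cons negb_or eq_sym => /andP[/negbTE -> /IH ->].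
Qed.

Lemma rem_rowsB l l' m s i : uniq s -> i \in s -> part m i < part l i ->
  (forall r, r \in s -> part l' r = if r == i then (part l i).-1 else part l r) ->
  rem (i, i + part l i) (rowsB l m s) = rowsB l' m s.
Proof.
move=> us; elim: s us => //= a s IH /andP[na us] ins hlt E.
rewrite !rowsB_cons rem_cat mem_rowB.
case: (eqVneq a i) => [ai|ai] /=.
  subst a.
  have -> : i + part m i < i + part l i <= i + part l i by rewrite leqnn andbT ltn_add2l.
  have -> : rowsB l m s = rowsB l' m s.
    rewrite /rowsB; congr flatten; apply/eq_in_map => r rs.
    rewrite /rowB E ?in_cons ?rs ?orbT //; case: eqP => // ri.
    by move: na; rewrite -ri rs.
  congr (_ ++ _); rewrite /rowB E ?mem_head // eqxx.
  have -> : part l i - part m i = ((part l i).-1 - part m i).+1 by lia.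
  rewrite -[((part l i).-1 - part m i).+1]addn1 iotaD map_cat /= cats1.
  have -> : (i + part m i).+1 + ((part l i).-1 - part m i) = i + part l i by lia.
  rewrite rem_rcons //.
  apply/mapP => [[j]]; rewrite mem_iota => hj [E']; lia.
rewrite IH //; last first.
  - by move=> r rs; apply: E; rewrite in_cons rs orbT.
  - by move: ins; rewrite in_cons eq_sym (negbTE ai).
congr (_ ++ _); rewrite /rowB E ?mem_head // (negbTE ai) //.
Qed.


Definition corner (v : seq nat) (i : nat) := (i, i + part v i).

Lemma max_char v m b : is_strict v -> is_strict m -> contains v m ->
  (b \in skew_boxes v m) && maxb (skew_boxes v m) b =
  (b \in map (corner v) (filter (cond v m) (iota 1 (size v)))).
Proof.
move=> sv sm /containsP cvm; case: b => a c.
apply/idP/idP.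
- case/andP; rewrite mem_skew => /and4P[a0 av h1 h2] /allP hmax.
  case: a a0 av h1 h2 hmax => // a' _; rewrite /part /= => av h1 h2 hmax.
  have hc : c = a'.+1 + nth 0 v a'.
    apply/eqP; rewrite eqn_leq h2 /=; rewrite leqNgt; apply/negP => hlt.
    have := hmax (a'.+1, c.+1); rewrite mem_skew /part /= av /=.
    have -> : a'.+1 + nth 0 m a' < c.+1 <= a'.+1 + nth 0 v a' by lia.
    by rewrite /boxrel /= eqxx ltnSn => /(_ isT).
  apply/mapP; exists a'.+1; last by rewrite /corner /part /= hc.
  rewrite mem_filter mem_iota /= add1n ltnS av andbT.
  rewrite /cond /part /=; apply/andP; split; first by lia.
  case: (ltnP (nth 0 v a'.+1).+1 (nth 0 v a')) => hh; first by [].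
  apply/orP; right; apply/negP => /negP nz.
  have a1v : a'.+1 < size v by rewrite -(strict_gt0 _ sv) lt0n.
  have st := strict_step sv a1v.
  have hm : nth 0 m a'.+1 + 1 < nth 0 v a'.
    case: (eqVneq (nth 0 m a'.+1) 0) => [->|nzm]; first by lia.
    have a1m : a'.+1 < size m by rewrite -(strict_gt0 _ sm) lt0n.
    have := strict_step sm a1m; lia.
  have := hmax (a'.+2, c); rewrite mem_skew /part /= a1v /=.
  have -> : a'.+2 + nth 0 m a'.+1 < c <= a'.+2 + nth 0 v a'.+1 by lia.
  by rewrite /boxrel /= eqxx ltnSn orbT => /(_ isT).
- case/mapP => i; rewrite mem_filter mem_iota => /andP[cnd /andP[i1 i2]] [-> ->].
  case: i cnd i1 i2 => // i' cnd _; rewrite add1n ltnS => iv.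
  move: cnd; rewrite /cond /part /= => /andP[c1 c2].
  apply/andP; split.
    by rewrite mem_skew /part /= iv /=; lia.
  apply/allP => [[a2 c2']]; rewrite mem_skew => /and4P[a20 a2v h1 h2].
  case: a2 a20 a2v h1 h2 => // a2' _; rewrite /part /= => a2v h1 h2.
  rewrite /boxrel /= negb_or !negb_and.
  apply/andP; split.
    by case: eqP => [[E]|] //=; subst a2'; rewrite -leqNgt.
  case: (eqVneq c2' (i'.+1 + nth 0 v i')) => //= E; rewrite -leqNgt.
  rewrite leqNgt; apply/negP => hi.
  case/orP: c2 => [c2|/eqP c2].
    have := strict_gap sv (a := i'.+1) (b := a2'); lia.
  have : i'.+1 < size v.
    by lia.
  by rewrite -(strict_gt0 _ sv) c2.
Qed.

Lemma skew_nonempty v m : is_strict v -> is_strict m -> contains v m -> psize m < psize v ->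
  0 < size (skew_boxes v m).
Proof.
move=> sv sm /containsP cvm hp.
have hm : size m <= size v.
  rewrite leqNgt; apply/negP => h; have := cvm (size v); have := strict_pos sm h.
  rewrite [nth 0 v _]nth_default //; lia.
move: hp; rewrite (psize_sum hm) (psize_sum (leqnn (size v))) => hp.
case: (pickP (fun j : 'I_(size v) => nth 0 m j < nth 0 v j)) => [j hj|H]; last first.
  have : \sum_(i < size v) nth 0 v i <= \sum_(i < size v) nth 0 m i.
    by apply: leq_sum => i _; have := H i; rewrite /=; lia.
  move: hp; move: (\sum_(i < size v) nth 0 v i) (\sum_(i < size v) nth 0 m i) => *; lia.
have : (j.+1, (j.+1 + nth 0 m j).+1) \in skew_boxes v m.
  rewrite mem_skew /part /= ltn_ord /=; move: hj; clear; lia.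
by case: (skew_boxes v m).
Qed.

Lemma f_skew_rec v m : is_strict v -> is_strict m -> contains v m -> psize m < psize v ->
  f_skew v m = \sum_(i <- iota 1 (size v) | cond v m i) f_skew (dec v i) m.
Proof.
move=> sv sm cvm hp.
rewrite f_skewE fcount_rec ?skew_nonempty ?skew_uniq // -big_filter.
rewrite (perm_big (map (corner v) (filter (cond v m) (iota 1 (size v))))); last first.
  apply: uniq_perm.
  - by rewrite filter_uniq // skew_uniq.
  - rewrite map_inj_uniq ?filter_uniq ?iota_uniq //; by move=> x y [].
  - by move=> b; rewrite mem_filter andbC max_char.
rewrite big_map big_filter [LHS]big_seq_cond [RHS]big_seq_cond; apply: eq_bigr => i.
rewrite mem_iota => /andP[/andP[i1 i2] ci].
case: i i1 i2 ci => // j _; rewrite add1n ltnS => jv ci.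
rewrite f_skewE (skew_boxes_ext m (leqnn (size v))).
have hs : size (dec v j.+1) <= size v by rewrite size_dec //; case: ifP => //; lia.
rewrite (skew_boxes_ext m hs) /corner; congr fcount.
apply: rem_rowsB; rewrite ?iota_uniq ?mem_iota //=.
  by case/andP: ci.
move=> r; rewrite mem_iota; case: r => // r /andP[_ hr].
by rewrite /part /= nth_dec // eqSS.
Qed.

Import GRing.Theory.


Lemma size_sum l K : is_strict l -> size l <= K -> size l = \sum_(i < K) (0 < nth 0 l i : nat).
Proof.
move=> sl hK; rewrite -(subnKC hK) big_split_ord /=.
rewrite [X in _ + X]big1 ?addn0; last first.
  by move=> i _; rewrite nth_default // leq_addr.
rewrite (eq_bigr (fun _ => 1)); last by move=> i _; rewrite strict_pos.
by rewrite sum1_card card_ord.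
Qed.

Lemma psize_ineq l m : is_strict l -> is_strict m -> contains l m ->
  psize m + size l <= psize l + size m.
Proof.
move=> sl sm /containsP clm.
have hm : size m <= size l.
  rewrite leqNgt; apply/negP => h; have := clm (size l); have := strict_pos sm h.
  rewrite [nth 0 l _]nth_default //; lia.
rewrite {1}(size_sum sl (leqnn _)) (size_sum sm hm) (psize_sum hm) (psize_sum (leqnn _)).
rewrite -!big_split /=; apply: leq_sum => i _.
have := clm i; case: (nth 0 m i) => [|a]; case: (nth 0 l i) => [|b] //=; lia.
Qed.

Definition ex (l m : seq nat) := (psize l + size m) - (psize m + size l).

Lemma term_dec lp m j : is_strict lp -> is_strict m -> contains lp m -> j < size lp ->
  cond lp m j.+1 ->
  (f'_skew (dec lp j.+1) m * (((size (dec lp j.+1) < size lp)%N)%:R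
      + 2 * ((size lp == size (dec lp j.+1))%N)%:R) =
   2 ^+ ex lp m * (f_skew (dec lp j.+1) m)%:R :> Cplx)%R.
Proof.
move=> slp sm clm jv c.
have /and4P[sd _ cdm _] := dec_in slp clm jv c.
have ineq := psize_ineq sd sm cdm.
have p0 : 0 < psize lp.
  rewrite (psize_sum (leqnn _)) (bigD1 (Ordinal jv)) //=.
  by have := strict_pos slp jv; lia.
rewrite /f'_skew /ex; move: ineq; rewrite psize_dec // size_dec //.
case: ifP => h1 ineq.
  have sz := last_one slp jv (eqP h1).
  rewrite sz ltnSn eqn_leq ltnn /= mulr0 addr0 mulr1.
  by congr (2 ^+ _ * _)%R; lia.
rewrite ltnn eqxx /= add0r mulr1 -mulrA [((f_skew _ _)%:R * 2)%R]mulrC mulrA -exprSr.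
by congr (2 ^+ _ * _)%R; lia.
Qed.

From mathcomp Require Import ring.
Local Open Scope ring_scope.


Definition w (l lp : seq nat) : Cplx :=
  (contains lp l && (size l < size lp)%N)%:R + 2 * (contains lp l && (size lp == size l)%N)%:R.

Lemma split_cond (s : seq (seq nat)) (P Q : pred (seq nat)) (F : seq nat -> Cplx) (c : Cplx) :
  c * (\sum_(x <- s | P x) F x + 2 * \sum_(x <- s | Q x) F x) =
  \sum_(x <- s) c * ((P x)%:R + 2 * (Q x)%:R) * F x.
Proof.
elim: s => [|x s IH]; first by rewrite !big_nil mulr0 addr0 mulr0.
rewrite !big_cons -IH; case: (P x); case: (Q x) => /=; ring.
Qed.

Lemma inner m lp M : is_strict m -> is_strict lp -> psize lp = M.+1 -> (psize m <= M)%N ->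
  \sum_(l <- strict_parts M | contains l m) f'_skew l m * w l lp =
  if contains lp m then f'_skew lp m else 0.
Proof.
move=> sm slp plp pm.
transitivity (\sum_(l <- strict_parts M | contains l m && contains lp l)
   f'_skew l m * (((size l < size lp)%N)%:R + 2 * ((size lp == size l)%N)%:R)).
  rewrite big_mkcond [RHS]big_mkcond; apply: eq_bigr => l _.
  by rewrite /w; case: (contains l m) => //=; case: (contains lp l) => //=; rewrite mulr0 addr0 mulr0.
case: ifP => cm.
  have -> : M = (psize lp).-1 by rewrite plp.
  rewrite reindex_dec // ?plp // big_seq_cond.
  rewrite (eq_bigr (fun i => 2 ^+ ex lp m * (f_skew (dec lp i) m)%:R)); last first.
    move=> i /andP[]; rewrite mem_iota => /andP[i1 i2] ci.
    case: i i1 i2 ci => // j _; rewrite add1n ltnS => jv ci.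
    exact: term_dec.
  rewrite -big_seq_cond -mulr_sumr -natr_sum -f_skew_rec // ?plp //.
rewrite big1_seq // => l /andP[/andP[/containsP clm /containsP clp] _].
move/negbT: cm => /negP; case; apply/containsP => i.
exact: leq_trans (clm i) (clp i).
Qed.

Lemma key mu g n : is_strict mu ->
  skew_sum mu g n.+1 = skew_sum mu g n + skew_sum mu (Dop g) n.
Proof.
move=> smu; rewrite /skew_sum addnS.
set M := (psize mu + n)%N.
have E1 : \sum_(l <- strict_parts M | contains l mu) f'_skew l mu * Dop g l =
   \sum_(l <- strict_parts M | contains l mu)
       (\sum_(lp <- strict_parts M.+1) (f'_skew l mu * w l lp) * g lp)
   - \sum_(l <- strict_parts M | contains l mu) f'_skew l mu * g l.
  rewrite -sumrB [LHS]big_seq_cond [RHS]big_seq_cond; apply: eq_bigr => l.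
  rewrite mem_strict_parts => /andP[/andP[sl /eqP pl] _].
  rewrite /Dop pl mulrBr; congr (_ - _).
  rewrite split_cond; apply: eq_bigr => lp _; rewrite /w.
  case: (contains lp l); case: (size l < size lp)%N; case: (size lp == size l)%N;
    rewrite /= ?mulr0 ?mulr1 ?addr0 ?add0r ?mul0r ?mul1r ?mulrA //.
rewrite E1 addrC subrK.
rewrite exchange_big /=.
rewrite [LHS]big_mkcond big_seq [RHS]big_seq; apply: eq_bigr => lp.
rewrite mem_strict_parts => /andP[slp /eqP plp].
rewrite -mulr_suml (inner smu slp plp); last by rewrite /M leq_addr.
by case: (contains lp mu); rewrite ?mul0r.
Qed.

Theorem lemma2p2 (mu : seq nat) (g : seq nat -> Cplx) :
  is_strict mu ->
  forall n : nat,
    skew_sum mu g n = (skew_sum mu g 0 + \sum_(k < n) skew_sum mu (Dop g) k)%R.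
Proof.
move=> smu; elim=> [|n IH]; first by rewrite big_ord0 addr0.
by rewrite key // IH big_ord_recr /= addrA.
Qed.
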